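(* Let $X,Y$ be continuous processes. Then 1. $L(X,Y)_t=\int_0^tX\,d^\circ Y-\int_0^tY\,d^\circ X$; 2. $L(X,Y)_t=\int_0^tX\,d^-Y-\int_0^tY\,d^-X$; where each identity is understood in the sense that if two of its three terms exist, then the third also exists and the identity holds.
   Context: $T>0$; continuous functions are extended by $f(t)=f(0)$ for $t\le0$, $f(t)=f(T)$ for $t>T$. Limits are ucp: uniform in $t\in[0,T]$, in probability, as $\varepsilon\to0^+$. $\int_0^tX\,d^-Y$ is the ucp limit of $\int_0^tX(s)\frac{Y(s+\varepsilon)-Y(s)}{\varepsilon}ds$, $\int_0^tX\,d^\circ Y$ the ucp limit of $\int_0^tX(s)\frac{Y(s+\varepsilon)-Y(s-\varepsilon)}{2\varepsilon}ds$, and the Lévy area $L(X,Y)_t$ the ucp limit of $\int_0^t\frac{X_sY_{s+\varepsilon}-X_{s+\varepsilon}Y_s}{\varepsilon}ds$. *)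

(* Defs.v *)
From HB Require Import structures.
From mathcomp Require Import all_boot all_order all_algebra.
From mathcomp Require Import all_classical all_reals all_analysis.
Set Implicit Arguments. Unset Strict Implicit. Unset Printing Implicit Defensive.
Import Order.TTheory GRing.Theory Num.Theory.
Import numFieldNormedType.Exports.
Local Open Scope classical_set_scope.
Local Open Scope ring_scope.

Section Defs.
Context {R : realType} {d : measure_display} {Omega : measurableType d}.

Definition ext (T : R) (f : R -> R) (s : R) : R :=
  if s <= 0 then f 0 else if T < s then f T else f s.

Definition cont_process (P : probability Omega R) (T : R) (X : Omega -> R -> R) :=
  (forall t, 0 <= t <= T -> measurable_fun setT (fun w => X w t)) /\
  (forall w, {within `[0, T], continuous (X w)}).

(* ucp convergence as eps -> 0+ of Z eps to Z0, uniform on [0,T]; the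
   probability of the (possibly non-measurable) event is taken as outer probability *)
Definition ucp (P : probability Omega R) (T : R)
  (Z : R -> Omega -> R -> R) (Z0 : Omega -> R -> R) :=
  forall delta eta : R, 0 < delta -> 0 < eta ->
  exists eps0 : R, 0 < eps0 /\
  forall eps, 0 < eps < eps0 ->
  exists A : set Omega, measurable A /\
    [set w | exists t, 0 <= t <= T /\ delta < `|Z eps w t - Z0 w t| ] `<=` A /\
    (P A <= eta%:E)%E.

Definition fwd_approx (T : R) (X Y : Omega -> R -> R) (eps : R) (w : Omega) (t : R) : R :=
  Rintegral (@lebesgue_measure R) `[0, t]
    (fun s => ext T (X w) s * ((ext T (Y w) (s + eps) - ext T (Y w) s) / eps)).

Definition sym_approx (T : R) (X Y : Omega -> R -> R) (eps : R) (w : Omega) (t : R) : R :=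
  Rintegral (@lebesgue_measure R) `[0, t]
    (fun s => ext T (X w) s * ((ext T (Y w) (s + eps) - ext T (Y w) (s - eps)) / (2 * eps))).

Definition levy_approx (T : R) (X Y : Omega -> R -> R) (eps : R) (w : Omega) (t : R) : R :=
  Rintegral (@lebesgue_measure R) `[0, t]
    (fun s => (ext T (X w) s * ext T (Y w) (s + eps) - ext T (X w) (s + eps) * ext T (Y w) s) / eps).

End Defs.

(* Main.v *)
Require Import Defs.
From HB Require Import structures.
From mathcomp Require Import all_boot all_order all_algebra.
From mathcomp Require Import all_classical all_reals all_analysis.
From mathcomp Require Import lra ring measurable_realfun.
Set Implicit Arguments. Unset Strict Implicit. Unset Printing Implicit Defensive.
Import Order.TTheory GRing.Theory Num.Theory.
Import numFieldNormedType.Exports.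
Local Open Scope classical_set_scope.
Local Open Scope ring_scope.


Section S.
Context {R : realType}.

Definition clamp (T s : R) : R := if s <= 0 then 0 else if T < s then T else s.

Ltac clcase := repeat (case: ifPn => ?); repeat match goal with H : is_true (~~ _) |- _ => rewrite -?ltNge -?leNgt in H end.

Lemma clamp_ge0 T s : 0 < T -> 0 <= clamp T s.
Proof. move=> hT; rewrite /clamp; clcase; lra. Qed.

Lemma within_ed (T : R) (f : R -> R) (c : R) : {within `[0, T], continuous f} -> 0 <= c <= T ->
  forall e : R, 0 < e -> exists2 d : R, 0 < d & forall y : R, 0 <= y <= T -> `|c - y| < d -> `|f c - f y| < e.
Proof.
move=> hf hc e he.
have hc' : `[0, T]%classic c by rewrite /= in_itv /=.
move/subspace_continuousP: hf => /(_ c hc').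
move/cvgrPdist_lt => /(_ e he).
rewrite /within /= => /nbhs_ballP [d hd hb]; exists d => // y hy hcy.
apply: hb; rewrite /ball /= ?in_itv /=; by [].
Qed.

Lemma ext_clamp T (f : R -> R) s : ext T f s = f (clamp T s).
Proof. by rewrite /ext /clamp; case: ifP => //; case: ifP. Qed.

Lemma clamp_le T s : 0 < T -> clamp T s <= T.
Proof. move=> hT; rewrite /clamp; clcase; lra. Qed.

Lemma clamp_id T s : 0 <= s <= T -> clamp T s = s.
Proof. move=> /andP[h1 h2]; rewrite /clamp; clcase; lra. Qed.

Lemma clamp_lip T s u : 0 < T -> `|clamp T s - clamp T u| <= `|s - u|.
Proof.
move=> hT; have h1 := ler_norm (s - u); have h2 := ler_norm (u - s).
rewrite distrC in h2; rewrite ler_norml; rewrite /clamp; clcase; apply/andP; split; lra.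
Qed.

Lemma ext_ed T (f : R -> R) : 0 < T -> {within `[0, T], continuous f} ->
  forall c e : R, 0 < e -> exists2 d : R, 0 < d & forall y : R,
    `|c - y| < d -> `|ext T f c - ext T f y| < e.
Proof.
move=> hT hf c e he.
have hc : 0 <= clamp T c <= T by rewrite clamp_ge0 ?clamp_le.
have [d hd H] := within_ed hf hc he.
exists d => // y hy; rewrite !ext_clamp; apply: H.
  by rewrite clamp_ge0 ?clamp_le.
exact: le_lt_trans (clamp_lip _ _ hT) hy.
Qed.

Lemma ext_cont T (f : R -> R) : 0 < T -> {within `[0, T], continuous f} ->
  continuous (ext T f).
Proof.
move=> hT hf c; apply/cvgrPdist_lt => e he.
have [d hd H] := ext_ed hT hf c he.
apply/nbhs_ballP; exists d => // y hy; exact: H.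
Qed.

Notation mu := (@lebesgue_measure R).

Lemma cont_int (g : R -> R) (a b : R) : continuous g -> mu.-integrable `[a, b] (EFin \o g).
Proof.
move=> hg; apply: continuous_compact_integrable; first exact: segment_compact.
exact: continuous_subspaceT.
Qed.

Definition Prim (g : R -> R) (x : R) := Rintegral mu `[-2, x] g.

Lemma Prim_diff (g : R -> R) (a b : R) : continuous g -> -2 <= a -> a <= b ->
  Rintegral mu `[a, b] g = Prim g b - Prim g a.
Proof.
move=> hg ha hab; rewrite /Prim.
rewrite (@Rintegral_itvB _ g (BLeft (-2)) (BRight b) a) //; last 2 first.
2: exact: cont_int.
rewrite Rintegral_itv_obnd_cbnd //.
apply: integrableS (cont_int a b hg) => //.
exact: subset_itv_oc_cc.
Qed.

Lemma Prim_derivable (g : R -> R) (x : R) : continuous g -> -2 < x ->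
  derivable (Prim g) x 1 /\ derive1 (Prim g) x = g x.
Proof.
move=> hg hx.
have := @continuous_FTC1_closed R g (-2) x (x + 1) _ (cont_int _ _ hg) hx (hg x).
apply; lra.
Qed.

Lemma Prim_is_derive (g : R -> R) (x : R) : continuous g -> -2 < x ->
  is_derive x 1 (Prim g) (g x).
Proof.
move=> hg hx; have [d1 d2] := Prim_derivable hg hx.
rewrite -d2 derive1E; exact: derivableP.
Qed.

Lemma shift_derivable (k x : R) : derivable (shift k : R -> R) x 1.
Proof. by case: (is_derive_shift x 1 k). Qed.

Lemma Prim_shift (g : R -> R) (e t : R) : continuous g -> 0 < e <= 1 -> 0 <= t ->
  Rintegral mu `[0, t] (fun s => g (s - e)) = Prim g (t - e) - Prim g (-e).
Proof.
move=> hg /andP[he0 he1]; rewrite le_eqVlt => /predU1P[<-|ht].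
  by rewrite set_itv1 Rintegral_set1 sub0r subrr.
have hd (x : R) : 0 <= x -> derivable (Prim g \o shift (-e)) x 1 /\
    derive1 (Prim g \o shift (-e)) x = g (x - e).
  move=> hx.
  have hx' : -2 < x - e by lra.
  have [pd pv] := Prim_derivable hg hx'.
  split.
    apply/derivable1_diffP; apply: differentiable_comp; apply/derivable1_diffP.
      exact: shift_derivable.
    exact: pd.
  rewrite derive1_comp // /= pv derive1E. have := derive_shift 1 (-e). move/(congr1 (fun f => f x)) => /= ->. by rewrite mulr1.
have hc (x : R) : 0 <= x -> {for x, continuous (Prim g \o shift (-e))}.
  move=> hx; apply: differentiable_continuous; apply/derivable1_diffP.
  by case: (hd x hx).
have hgs : continuous (fun s => g (s - e)).
  move=> x; apply: (@continuous_comp _ _ _ (shift (-e)) g x); last exact: hg.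
  apply: differentiable_continuous; apply/derivable1_diffP; exact: shift_derivable.
have h1 : {within `[0, t], continuous (fun s => g (s - e))}.
  exact: (continuous_subspaceT hgs).
have h2 : derivable_oo_LRcontinuous (Prim g \o shift (-e)) 0 t.
  split.
  + by move=> x; rewrite in_itv /= => /andP[h5 _]; case: (hd x (ltW h5)).
  + exact/cvg_at_right_filter/hc.
  + exact/cvg_at_left_filter/hc/ltW.
have h3 : {in `]0, t[, derive1 (Prim g \o shift (-e)) =1 (fun s => g (s - e))}.
  by move=> x; rewrite in_itv /= => /andP[h4 _]; case: (hd x (ltW h4)).
have H := @continuous_FTC2 R (fun s => g (s - e)) (Prim g \o shift (-e)) 0 t ht h1 h2 h3.
rewrite /Rintegral H.
by rewrite -EFinB /= add0r.
Qed.

Lemma Prim_mvt (g : R -> R) (a e : R) : continuous g -> -1 <= a -> 0 < e ->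
  exists c : R, Prim g (a + e) - Prim g a = g c * e.
Proof.
move=> hg ha he.
have hder (x : R) : a <= x -> is_derive x 1 (Prim g) (g x).
  move=> hx; apply: Prim_is_derive => //; lra.
have hab : a < a + e by lra.
have hdd : forall x, x \in `]a, a + e[ -> is_derive x 1 (Prim g) (g x).
  by move=> x; rewrite in_itv /= => /andP[h1 _]; apply: hder; apply: ltW.
have hcont : {within `[a, a + e], continuous (Prim g)}.
  apply: derivable_within_continuous => x; rewrite in_itv /= => /andP[h1 _].
  by have := hder x h1; case.
have [c _ hc] := MVT hab hdd hcont.
exists c; rewrite hc; congr (_ * _); ring.
Qed.

Lemma cont_shift (f : R -> R) (c : R) : continuous f -> continuous (fun s => f (s + c)).
Proof.
move=> hf x; apply: (@continuous_comp _ _ _ (shift c) f x); last exact: hf.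
apply: differentiable_continuous; apply/derivable1_diffP; exact: shift_derivable.
Qed.

Lemma cont_M (f g : R -> R) : continuous f -> continuous g -> continuous (fun s => f s * g s).
Proof. by move=> hf hg x; apply: cvgM; [exact: hf|exact: hg]. Qed.
Lemma cont_B (f g : R -> R) : continuous f -> continuous g -> continuous (fun s => f s - g s).
Proof. by move=> hf hg x; apply: cvgB; [exact: hf|exact: hg]. Qed.
Lemma cont_D (f g : R -> R) : continuous f -> continuous g -> continuous (fun s => f s + g s).
Proof. by move=> hf hg x; apply: cvgD; [exact: hf|exact: hg]. Qed.
Lemma cont_C (k : R) : continuous (fun _ : R => k).
Proof. by move=> x; exact: cvg_cst. Qed.

Ltac cont := repeat first [ apply: cont_M | apply: cont_B | apply: cont_D | apply: cont_C
   | apply: cont_shift | assumption ].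

Lemma fwd_id (x y : R -> R) (e t : R) : continuous x -> continuous y -> e != 0 ->
  Rintegral mu `[0, t] (fun s => (x s * y (s + e) - x (s + e) * y s) / e) =
  Rintegral mu `[0, t] (fun s => x s * ((y (s + e) - y s) / e)) -
  Rintegral mu `[0, t] (fun s => y s * ((x (s + e) - x s) / e)).
Proof.
move=> hx hy he; rewrite -RintegralB //.
- by apply: eq_Rintegral => s _; field.
- apply: cont_int; cont.
- apply: cont_int; cont.
Qed.

Lemma sym_res (x y : R -> R) (e t : R) : continuous x -> continuous y -> 0 < e <= 1 -> 0 <= t ->
  exists c1 c2 : R,
  Rintegral mu `[0, t] (fun s => (x s * y (s + e) - x (s + e) * y s) / e) -
  (Rintegral mu `[0, t] (fun s => x s * ((y (s + e) - y (s - e)) / (2 * e))) -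
   Rintegral mu `[0, t] (fun s => y s * ((x (s + e) - x (s - e)) / (2 * e)))) =
  (x c1 * y (c1 + e) - x (c1 + e) * y c1) / 2 - (x c2 * y (c2 + e) - x (c2 + e) * y c2) / 2.
Proof.
move=> hx hy /andP[he0 he1] ht.
have he : e != 0 by rewrite gt_eqF.
pose h s := (x s * y (s + e) - x (s + e) * y s) / e / 2.
have hh : continuous h by rewrite /h; cont.
have hhs : continuous (fun s => h (s - e)) by apply: cont_shift.
rewrite -RintegralB //; last 2 first.
- apply: cont_int; cont.
- apply: cont_int; cont.
have -> : Rintegral mu `[0, t] (fun s => (x s * y (s + e) - x (s + e) * y s) / e) =
   Rintegral mu `[0, t] h + Rintegral mu `[0, t] h.
  rewrite -RintegralD //; last 2 first.
  - exact: cont_int.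
  - exact: cont_int.
  by apply: eq_Rintegral => s _; rewrite /h; field.
have -> : Rintegral mu `[0, t] (fun s => x s * ((y (s + e) - y (s - e)) / (2 * e)) -
     y s * ((x (s + e) - x (s - e)) / (2 * e))) =
   Rintegral mu `[0, t] h + Rintegral mu `[0, t] (fun s => h (s - e)).
  rewrite -RintegralD //; last 2 first.
  - exact: cont_int.
  - exact: cont_int.
  by apply: eq_Rintegral => s _; rewrite /h subrK; field.
rewrite Prim_shift // ?he0 ?he1 // Prim_diff //.

have [c1 hc1] := @Prim_mvt h (t - e) e hh ltac:(lra) he0.
have [c2 hc2] := @Prim_mvt h (- e) e hh ltac:(lra) he0.
rewrite subrK in hc1; rewrite addNr in hc2.
exists c1, c2.
transitivity ((Prim h t - Prim h (t - e)) - (Prim h 0 - Prim h (- e))); first ring.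
by rewrite hc1 hc2 /h; field.
Qed.
End S.


Section E.
Context {R : realType}.

Definition Kf (x y : R -> R) (s u : R) := x s * y u - x u * y s.

Lemma prod_close (a a' b b' r : R) : `|a - a'| <= r -> `|b - b'| <= r -> r <= 1 ->
  `|a * b - a' * b'| <= r * (`|a| + `|b| + 1).
Proof.
move=> ha hb hr.
have -> : a * b - a' * b' = a * (b - b') + (a - a') * b' by ring.
have hb' : `|b'| <= `|b| + 1.
  have := ler_normD b (b' - b); rewrite addrC subrK distrC => h; lra.
apply: le_trans (ler_normD _ _) _; rewrite !normrM.
have h0 := normr_ge0 a; have h1 := normr_ge0 (b - b'); have h2 := normr_ge0 (a - a');
have h3 := normr_ge0 b'; have h4 := normr_ge0 b.
nra.
Qed.

Lemma K_cont (T : R) (x y : R -> R) (s u : R) :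
  {within `[0, T], continuous x} -> {within `[0, T], continuous y} ->
  0 <= s <= T -> 0 <= u <= T -> forall e : R, 0 < e ->
  exists2 d : R, 0 < d & forall p q : R, 0 <= p <= T -> 0 <= q <= T ->
    `|s - p| < d -> `|u - q| < d -> `|Kf x y s u - Kf x y p q| < e.
Proof.
move=> hx hy hs hu e he.
pose M := `|x s| + `|y u| + `|x u| + `|y s| + 2.
have hM : 0 < M.
  rewrite /M; have := normr_ge0 (x s); have := normr_ge0 (y u);
  have := normr_ge0 (x u); have := normr_ge0 (y s); lra.
pose r := Num.min 1 (e / (2 * M)).
have hr : 0 < r by rewrite lt_min ltr01 /= divr_gt0 // mulr_gt0.
have hr1 : r <= 1 by rewrite ge_min lexx.
have hrM : r * M <= e / 2.
  have : r <= e / (2 * M) by rewrite ge_min lexx orbT.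
  move=> h; have -> : e / 2 = e / (2 * M) * M by field; rewrite gt_eqF.
  by apply: ler_wpM2r => //; apply: ltW.
have [d1 hd1 H1] := within_ed hx hs hr.
have [d2 hd2 H2] := within_ed hx hu hr.
have [d3 hd3 H3] := within_ed hy hs hr.
have [d4 hd4 H4] := within_ed hy hu hr.
exists (Num.min (Num.min d1 d2) (Num.min d3 d4)).
  by rewrite !lt_min hd1 hd2 hd3 hd4.
move=> p q hp hq; rewrite !lt_min => /andP[/andP[a1 a2] /andP[a3 a4]]
  /andP[/andP[b1 b2] /andP[b3 b4]].
have c1 := ltW (H1 p hp a1); have c2 := ltW (H2 q hq b2).
have c3 := ltW (H3 p hp a3); have c4 := ltW (H4 q hq b4).
have P1 := prod_close c1 c4 hr1.
have P2 := prod_close c2 c3 hr1.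
rewrite /Kf.
have -> : x s * y u - x u * y s - (x p * y q - x q * y p) =
  (x s * y u - x p * y q) - (x u * y s - x q * y p) by ring.
apply: le_lt_trans (ler_normB _ _) _.
have : r * (`|x s| + `|y u| + 1) + r * (`|x u| + `|y s| + 1) = r * M by rewrite /M; ring.
lra.
Qed.

Lemma K_small (T : R) (x y : R -> R) : 0 < T ->
  {within `[0, T], continuous x} -> {within `[0, T], continuous y} ->
  forall eps : R, 0 < eps -> exists n : nat, forall p q : R, 0 <= p <= T -> 0 <= q <= T ->
    n.+1%:R * `|p - q| < 2 -> `|Kf x y p q| <= eps.
Proof.
move=> hT hx hy eps heps.
apply: contrapT => H.
have H' : forall n : nat, exists pq : R * R, (0 <= pq.1 <= T) /\ (0 <= pq.2 <= T) /\
    n.+1%:R * `|pq.1 - pq.2| < 2 /\ eps < `|Kf x y pq.1 pq.2|.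
  move=> n; apply: contrapT => H2; apply: H; exists n => p q hp hq hpq.
  rewrite leNgt; apply/negP => hlt; apply: H2; by exists (p, q).
have [f hf] := choice H'.
pose ps n := (f n).1.
have cpt := @segment_compact R 0 T.
have [c [hc hcl]] : `[0, T]%classic `&` cluster (ps @ \oo) !=set0.
  apply: (cpt (ps @ \oo)); exists 0%N => // n _ /=; have [h _] := hf n; by rewrite /= in_itv.
have hc' : 0 <= c <= T by move: hc; rewrite /= in_itv.
have [d hd Hd] := K_cont hx hy hc' hc' heps.
have Kcc : Kf x y c c = 0 by rewrite /Kf subrr.
pose N := Num.truncn (4 / d).
have hN : 4 / d < N.+1%:R by exact: truncnS_gt.
rewrite ltr_pdivrMr // in hN.
have hd2 : 0 < d / 2 by lra.
have := hcl [set z | exists2 n, (N <= n)%N & z = ps n] (ball c (d / 2)).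
case.
- by exists N => // n /= hn; exists n.
- exact: nbhsx_ballx.
move=> z [[n hn ->] hb].
have [hp [hq [hpq hK]]] := hf n.
have hb' : `|c - ps n| < d / 2 by move: hb; rewrite /ball /=.
have hNn : N.+1%:R <= n.+1%:R :> R by rewrite ler_nat ltnS.
have hpq' : `|(f n).1 - (f n).2| < d / 2.
  have h0 := normr_ge0 ((f n).1 - (f n).2).
  have h2 : N.+1%:R * d <= n.+1%:R * d :> R by apply: ler_wpM2r => //; apply: ltW.
  have h3 : 0 < n.+1%:R :> R by rewrite ltr0n.
  nra.
have h1 : `|c - (f n).2| < d.
  have h0 := ler_normD (c - (f n).1) ((f n).1 - (f n).2).
  rewrite addrA subrK in h0; rewrite /ps in hb'; lra.
have := Hd (f n).1 (f n).2 hp hq ltac:(rewrite /ps in hb'; lra) h1.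
rewrite Kcc sub0r normrN; lra.
Qed.
End E.


Section D.
Context {R : realType} {d : measure_display} {Omega : measurableType d}.
Variable P : probability Omega R.

Lemma ucp_comb (T : R) (A B C Res : R -> Omega -> R -> R) (a b z : Omega -> R -> R) (c : R) :
  `|c| <= 1 ->
  (forall w t, z w t = a w t + c * b w t) ->
  (forall e w t, 0 < e < 1 -> 0 <= t <= T ->
     `|C e w t - (A e w t + c * B e w t)| <= `|Res e w t|) ->
  ucp P T A a -> ucp P T B b -> ucp P T Res (fun _ _ => 0) -> ucp P T C z.
Proof.
move=> hc hz hres hA hB hR delta eta hd he.
have hd3 : 0 < delta / 3 by lra.
have he3 : 0 < eta / 3 by lra.
have [e1 [he1 H1]] := hA _ _ hd3 he3.
have [e2 [he2 H2]] := hB _ _ hd3 he3.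
have [e3 [he3' H3]] := hR _ _ hd3 he3.
exists (Num.min (Num.min e1 e2) (Num.min e3 1)); split.
  by rewrite !lt_min he1 he2 he3' ltr01.
move=> eps /andP[heps]; rewrite !lt_min => /andP[/andP[h1 h2] /andP[h3 h4]].
have [A1 [mA1 [sA1 pA1]]] := H1 eps ltac:(by rewrite heps h1).
have [A2 [mA2 [sA2 pA2]]] := H2 eps ltac:(by rewrite heps h2).
have [A3 [mA3 [sA3 pA3]]] := H3 eps ltac:(by rewrite heps h3).
exists (A1 `|` A2 `|` A3); split; first by apply: measurableU => //; apply: measurableU.
split.
  move=> w [t [ht hlt]].
  have hr := hres eps w t ltac:(by rewrite heps h4) ht.
  have key : `|C eps w t - z w t| <=
     `|Res eps w t - 0| + `|A eps w t - a w t| + `|B eps w t - b w t|.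
    rewrite hz subr0.
    have -> : C eps w t - (a w t + c * b w t) =
      (C eps w t - (A eps w t + c * B eps w t)) + (A eps w t - a w t) + c * (B eps w t - b w t) by ring.
    apply: le_trans (ler_normD _ _) _; apply: lerD; first apply: le_trans (ler_normD _ _) _.
      by apply: lerD.
    rewrite normrM; rewrite -[X in _ <= X]mul1r; apply: ler_wpM2r => //.
  have [hA1|hA1] := boolP (delta / 3 < `|A eps w t - a w t|).
    by left; left; apply: sA1; exists t.
  have [hB1|hB1] := boolP (delta / 3 < `|B eps w t - b w t|).
    by left; right; apply: sA2; exists t.
  have [hR1|hR1] := boolP (delta / 3 < `|Res eps w t - 0|).
    by right; apply: sA3; exists t.
  rewrite -!leNgt in hA1 hB1 hR1; lra.
apply: le_trans (measureU2 _ _ _) _ => //; first exact: measurableU.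
apply: le_trans (leeD (measureU2 _ _ _) (lexx _)) _ => //.
have -> : eta = eta / 3 + eta / 3 + eta / 3 by field.
by rewrite !EFinD; apply: leeD => //; apply: leeD.
Qed.
End D.


Section F.
Context {R : realType} {d : measure_display} {Omega : measurableType d}.
Variable P : probability Omega R.

Definition ResS (T : R) (X Y : Omega -> R -> R) (e : R) (w : Omega) (t : R) :=
  levy_approx T X Y e w t - (sym_approx T X Y e w t - sym_approx T Y X e w t).

Lemma pathwise (T : R) (X Y : Omega -> R -> R) : 0 < T -> cont_process P T X -> cont_process P T Y ->
  forall (delta e t : R) (w : Omega), 0 < e < 1 -> 0 <= t <= T ->
  delta < `|ResS T X Y e w t| ->
  exists s u : R, [/\ 0 <= s <= T, 0 <= u <= T, `|s - u| <= e & delta < `|Kf (X w) (Y w) s u|].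
Proof.
move=> hT [_ hX] [_ hY] delta e t w /andP[he0 he1] /andP[ht0 ht1] hlt.
have cx := ext_cont hT (hX w); have cy := ext_cont hT (hY w).
have he : 0 < e <= 1 by rewrite he0 ltW.
have [c1 [c2 H]] := sym_res cx cy he ht0.
rewrite /ResS /levy_approx /sym_approx H !ext_clamp in hlt.
have hcl (c : R) : [/\ 0 <= clamp T c <= T, 0 <= clamp T (c + e) <= T &
    `|clamp T c - clamp T (c + e)| <= e].
  split; first by rewrite clamp_ge0 ?clamp_le.
    by rewrite clamp_ge0 ?clamp_le.
  apply: le_trans (clamp_lip _ _ hT) _.
  have -> : c - (c + e) = - e by ring.
  rewrite normrN ger0_norm; [exact: lexx | exact: ltW].
set k1 := (X in X / 2 - _) in hlt.
set k2 := (X in _ - X / 2) in hlt.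
have hn : `|k1 / 2 - k2 / 2| <= `|k1| / 2 + `|k2| / 2.
  apply: le_trans (ler_normB _ _) _.
  rewrite !normrM; have -> : `|2^-1| = 2^-1 :> R by rewrite ger0_norm // invr_ge0. by [].
have [h1|h1] := boolP (delta < `|k1|).
  have [a1 a2 a3] := hcl c1; exists (clamp T c1), (clamp T (c1 + e)); split => //.
have [h2|h2] := boolP (delta < `|k2|).
  have [a1 a2 a3] := hcl c2; exists (clamp T c2), (clamp T (c2 + e)); split => //.
rewrite -!leNgt in h1 h2; lra.
Qed.


Lemma grid (s : R) (N : nat) : 0 <= s ->
  exists i : nat, i%:R / N.+1%:R <= s /\ (s - i%:R / N.+1%:R) * N.+1%:R < 1.
Proof.
move=> hs; have hN : 0 < N.+1%:R :> R by rewrite ltr0n.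
have hsN : 0 <= s * N.+1%:R by rewrite mulr_ge0 // ltW.
have /andP[h1 h2] := truncn_itv hsN.
exists (Num.truncn (s * N.+1%:R)); split.
  by rewrite ler_pdivrMr.
rewrite mulrBl divfK ?gt_eqF //.
rewrite -[(Num.truncn _).+1%:R]natr1 in h2; lra.
Qed.

Lemma ResS_ucp (T : R) (X Y : Omega -> R -> R) : 0 < T ->
  cont_process P T X -> cont_process P T Y -> ucp P T (ResS T X Y) (fun _ _ => 0).
Proof.
move=> hT hX hY delta eta hd he.
pose gp (N i : nat) : R := i%:R / N.+1%:R.
have gp0 N i : 0 <= gp N i by rewrite /gp divr_ge0.
pose Bs n N i j := [set w | (gp N i <= T /\ gp N j <= T /\ n.+1%:R * `|gp N i - gp N j| < 2)
   /\ delta / 2 < `|Kf (X w) (Y w) (gp N i) (gp N j)|].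
pose B n := \bigcup_N \bigcup_i \bigcup_j Bs n N i j.
have mBs n N i j : measurable (Bs n N i j).
  case: (pselect (gp N i <= T /\ gp N j <= T /\ n.+1%:R * `|gp N i - gp N j| < 2)) => hc.
    have -> : Bs n N i j = [set w | delta / 2 < `|Kf (X w) (Y w) (gp N i) (gp N j)|].
      by apply/seteqP; split => w /=; [case | move=> h; split].
    have [hi [hj _]] := hc.
    have mXi := hX.1 (gp N i) ltac:(by rewrite gp0 hi).
    have mXj := hX.1 (gp N j) ltac:(by rewrite gp0 hj).
    have mYi := hY.1 (gp N i) ltac:(by rewrite gp0 hi).
    have mYj := hY.1 (gp N j) ltac:(by rewrite gp0 hj).
    have mK : measurable_fun setT (fun w => `|Kf (X w) (Y w) (gp N i) (gp N j)|).
      apply: measurableT_comp => //.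
      by apply: measurable_funB; apply: measurable_funM.
    rewrite -[X in measurable X]setTI -preimage_itvoy.
    by apply: mK => //; exact: measurable_itv.
  have -> : Bs n N i j = set0 by apply/seteqP; split => w //= [].
  exact: measurable0.
have mB n : measurable (B n).
  apply: bigcupT_measurable => N; apply: bigcupT_measurable => i.
  apply: bigcupT_measurable => j; exact: mBs.
have decB : nonincreasing_seq B.
  move=> n m hnm; apply/subsetPset => w [N _ [i _ [j _ [[hi [hj hij]] hK]]]].
  exists N => //; exists i => //; exists j => //; split => //; split => //; split => //.
  have h1 : n.+1%:R <= m.+1%:R :> R by rewrite ler_nat ltnS.
  have := normr_ge0 (gp N i - gp N j); nra.
have capB : \bigcap_n B n = set0.
  apply/seteqP; split => w // hw.
  have hd2 : 0 < delta / 2 by lra.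
  have [n0 Hn0] := K_small hT (hX.2 w) (hY.2 w) hd2.
  have [N _ [i _ [j _ [[hi [hj hij]] hK]]]] := hw n0 I.
  have := Hn0 (gp N i) (gp N j) ltac:(apply/andP; split; [exact: gp0 | exact: hi]) ltac:(apply/andP; split; [exact: gp0 | exact: hj]) hij.
  lra.
have cvgB := @nonincreasing_cvg_mu _ _ _ P B
  (le_lt_trans (probability_le1 P (mB 0%N)) (ltry _)) mB ltac:(rewrite capB; exact: measurable0) decB.
rewrite capB measure0 in cvgB.
move/fine_cvgP: cvgB => [_ /cvgrPdist_lt /(_ eta he) [n0 _ Hn0]].
have {Hn0} := Hn0 n0 (leqnn n0).
rewrite /= sub0r normrN => hP.
have hPB : (P (B n0) <= eta%:E)%E.
  rewrite -(fineK (fin_num_measure P _ (mB n0))) lee_fin.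
  by apply: le_trans (ler_norm _) (ltW hP).
have hn1 : 0 < n0.+1%:R :> R by rewrite ltr0n.
exists (n0.+1%:R^-1); split; first by rewrite invr_gt0.
move=> e /andP[he0 hen].
have hne : n0.+1%:R * e < 1.
  by rewrite mulrC -ltr_pdivlMr // div1r.
have he1 : 0 < e < 1.
  rewrite he0 /=; have : 1 <= n0.+1%:R :> R by rewrite ler1n.
  nra.
exists (B n0); split; first exact: mB.
split => //.
move=> w [t [ht hlt]]; rewrite subr0 in hlt.
have [s [u [hs hu hsu hK]]] := pathwise hT hX hY he1 ht hlt.
have hd2 : 0 < delta / 2 by lra.
have [dd hdd Hdd] := K_cont (hX.2 w) (hY.2 w) hs hu hd2.
pose d' := Num.min dd (n0.+1%:R^-1 / 2).
have hd' : 0 < d' by rewrite lt_min hdd /= divr_gt0 // invr_gt0.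
have hd'1 : d' <= dd by rewrite ge_min lexx.
have hd'2 : n0.+1%:R * d' <= 1 / 2.
  have : d' <= n0.+1%:R^-1 / 2 by rewrite ge_min lexx orbT.
  move=> h; have := ler_wpM2l (ltW hn1) h.
  by rewrite mulrA mulfV ?gt_eqF // mul1r div1r.
pose N := Num.truncn (d'^-1).
have hN : d'^-1 < N.+1%:R by exact: truncnS_gt.
rewrite -div1r ltr_pdivrMr // in hN.
have hN1 : 0 < N.+1%:R :> R by rewrite ltr0n.
have /andP[hs0 hsT] := hs; have /andP[hu0 huT] := hu.
have [i [hi1 hi2]] := grid N hs0.
have [j [hj1 hj2]] := grid N hu0.
have hi3 : s - gp N i < d'.
  rewrite ltNge; apply/negP => h; have := ler_wpM2r (ltW hN1) h; rewrite /gp in h *; move=> h9.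
  by have := lt_trans (lt_le_trans hN ltac:(by rewrite mulrC; exact: h9)) hi2; rewrite ltxx.
have hj3 : u - gp N j < d'.
  rewrite ltNge; apply/negP => h; have := ler_wpM2r (ltW hN1) h; rewrite /gp in h *; move=> h9.
  by have := lt_trans (lt_le_trans hN ltac:(by rewrite mulrC; exact: h9)) hj2; rewrite ltxx.
have hsu' := hsu; rewrite ler_norml in hsu'; move/andP: hsu' => [hsu1 hsu2].
exists N => //; exists i => //; exists j => //; split; first split.
- by apply: le_trans hi1 hsT.
- split; first by apply: le_trans hj1 huT.
  have hgg : `|gp N i - gp N j| < 2 * d' + e.
    rewrite /gp in hi3 hj3 *.
    move: hi1 hj1 hi3 hj3; set p := i%:R / N.+1%:R; set q := j%:R / N.+1%:R => hi1 hj1 hi3 hj3.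
    rewrite ltr_norml; apply/andP; split; lra.
  apply: (@lt_le_trans _ _ (n0.+1%:R * (2 * d' + e))); first by rewrite ltr_pM2l.
  rewrite mulrDr mulrCA; lra.
- have hsi : `|s - gp N i| < dd.
    rewrite ger0_norm ?subr_ge0 //; exact: lt_le_trans hi3 hd'1.
  have huj : `|u - gp N j| < dd.
    rewrite ger0_norm ?subr_ge0 //; exact: lt_le_trans hj3 hd'1.
  have h := Hdd (gp N i) (gp N j) ltac:(apply/andP; split; [exact: gp0 | exact: le_trans hi1 hsT])
    ltac:(apply/andP; split; [exact: gp0 | exact: le_trans hj1 huT]) hsi huj.
  have := ler_normD (Kf (X w) (Y w) s u - Kf (X w) (Y w) (gp N i) (gp N j))
      (Kf (X w) (Y w) (gp N i) (gp N j)).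
  rewrite subrK => h'; move: h h' hK.
  set k1 := Kf (X w) (Y w) s u; set k2 := Kf (X w) (Y w) (gp N i) (gp N j).
  move=> h h' hK; lra.
Qed.

End F.

Section G.
Context {R : realType} {d : measure_display} {Omega : measurableType d}.
Variable P : probability Omega R.

Lemma ucp_zero (T : R) : ucp P T (fun _ _ _ => 0) (fun _ _ => 0).
Proof.
move=> delta eta hd he; exists 1; split; first exact: ltr01.
move=> e _; exists set0; split; first exact: measurable0.
split; last by rewrite measure0 lee_fin ltW.
by move=> w [t [_]]; rewrite subrr normr0 ltNge ltW.
Qed.

Lemma norm_pm (a b : R) : a = b \/ a = - b -> `|a| <= `|b|.
Proof. by case=> ->; rewrite ?normrN lexx. Qed.

End G.

Unset Implicit Arguments.
Close Scope classical_set_scope.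

Theorem proposition4p9 (R : realType) (d : measure_display) (Omega : measurableType d)
  (P : probability Omega R) (T : R) (hT : 0 < T) (X Y : Omega -> R -> R)
  (hX : cont_process P T X) (hY : cont_process P T Y) :
  (* 1. symmetric integrals *)
  (forall IXY IYX : Omega -> R -> R,
     ucp P T (sym_approx T X Y) IXY -> ucp P T (sym_approx T Y X) IYX ->
     ucp P T (levy_approx T X Y) (fun w t => IXY w t - IYX w t)) /\
  (forall L IXY : Omega -> R -> R,
     ucp P T (levy_approx T X Y) L -> ucp P T (sym_approx T X Y) IXY ->
     ucp P T (sym_approx T Y X) (fun w t => IXY w t - L w t)) /\
  (forall L IYX : Omega -> R -> R,
     ucp P T (levy_approx T X Y) L -> ucp P T (sym_approx T Y X) IYX ->
     ucp P T (sym_approx T X Y) (fun w t => L w t + IYX w t)) /\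
  (* 2. forward integrals *)
  (forall IXY IYX : Omega -> R -> R,
     ucp P T (fwd_approx T X Y) IXY -> ucp P T (fwd_approx T Y X) IYX ->
     ucp P T (levy_approx T X Y) (fun w t => IXY w t - IYX w t)) /\
  (forall L IXY : Omega -> R -> R,
     ucp P T (levy_approx T X Y) L -> ucp P T (fwd_approx T X Y) IXY ->
     ucp P T (fwd_approx T Y X) (fun w t => IXY w t - L w t)) /\
  (forall L IYX : Omega -> R -> R,
     ucp P T (levy_approx T X Y) L -> ucp P T (fwd_approx T Y X) IYX ->
     ucp P T (fwd_approx T X Y) (fun w t => L w t + IYX w t)).
Proof.
have hRes := ResS_ucp hT hX hY.
have h0 := @ucp_zero R d Omega P T.
have hm1 : `|(-1 : R)| <= 1 by rewrite normrN normr1.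
have hp1 : `|(1 : R)| <= 1 by rewrite normr1.
have hfw (e : R) (w : Omega) (t : R) : 0 < e < 1 ->
    levy_approx T X Y e w t = fwd_approx T X Y e w t - fwd_approx T Y X e w t.
  move=> /andP[he0 _].
  apply: fwd_id; [exact: ext_cont hT (hX.2 w) | exact: ext_cont hT (hY.2 w) | exact: lt0r_neq0].
split; [|split; [|split; [|split; [|split]]]].
- move=> IXY IYX h1 h2.
  apply: (ucp_comb (c := -1) (Res := ResS T X Y) hm1 _ _ h1 h2 hRes).
    by move=> w t; rewrite mulN1r.
  move=> e w t _ _; apply: norm_pm; left; rewrite /ResS mulN1r; by [].
- move=> L IXY h1 h2.
  apply: (ucp_comb (c := -1) (Res := ResS T X Y) hm1 _ _ h2 h1 hRes).
    by move=> w t; rewrite mulN1r.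
  move=> e w t _ _; apply: norm_pm; left; rewrite /ResS; ring.
- move=> L IYX h1 h2.
  apply: (ucp_comb (c := 1) (Res := ResS T X Y) hp1 _ _ h1 h2 hRes).
    by move=> w t; rewrite mul1r.
  move=> e w t _ _; apply: norm_pm; right; rewrite /ResS; ring.
- move=> IXY IYX h1 h2.
  apply: (ucp_comb (c := -1) (Res := fun _ _ _ => 0) hm1 _ _ h1 h2 h0).
    by move=> w t; rewrite mulN1r.
  move=> e w t he _; apply: norm_pm; left; rewrite hfw //; ring.
- move=> L IXY h1 h2.
  apply: (ucp_comb (c := -1) (Res := fun _ _ _ => 0) hm1 _ _ h2 h1 h0).
    by move=> w t; rewrite mulN1r.
  move=> e w t he _; apply: norm_pm; left; rewrite hfw //; ring.
- move=> L IYX h1 h2.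
  apply: (ucp_comb (c := 1) (Res := fun _ _ _ => 0) hp1 _ _ h1 h2 h0).
    by move=> w t; rewrite mul1r.
  move=> e w t he _; apply: norm_pm; left; rewrite hfw //; ring.
Qed.
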